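(* Let $n\ge 1$, $G=\langle a_1,b_1,\ldots,a_n,b_n \mid p_1p_2\cdots p_n\rangle$ with $p_i=a_ib_ia_i^{-1}b_i^{-1}$, $p=p_1\cdots p_n$, and let $P$ be the free resolution $0\to P_2\xrightarrow{d_2}P_1\xrightarrow{d_1}P_0\xrightarrow{\varepsilon}\mathbb{Z}\to0$ of $\mathbb{Z}$ over $\mathbb{Z}G$ with $P_0=\mathbb{Z}G\,x$, $P_1$ free on $y_1,\ldots,y_n,z_1,\ldots,z_n$, $P_2=\mathbb{Z}G\,w$, $\varepsilon(x)=1$, $d_1(y_i)=(a_i-1)x$, $d_1(z_i)=(b_i-1)x$, $d_2(w)=\sum_{i=1}^n\bigl(\frac{\partial p}{\partial a_i}y_i+\frac{\partial p}{\partial b_i}z_i\bigr)$. Then there is a diagonal approximation $\Delta\colon P\to P\otimes P$ such that \begin{align*} &\Delta_0(x)=x\otimes x,\qquad \Delta_1(y_i)=y_i\otimes a_ix+x\otimes y_i,\qquad \Delta_1(z_i)=z_i\otimes b_ix+x\otimes z_i,\\ &\Delta_{02}(w)=x\otimes w, \end{align*} and \begin{align*} \Delta_{11}(w)={}&\sum_{i=1}^n\Bigl[\sum_{j=1}^{i-1}(p_1\cdots p_{j-1})(1-a_jb_ja_j^{-1})y_j\otimes(p_1\cdots p_{i-1})y_i\\ &\qquad+\sum_{j=1}^{i-1}(p_1\cdots p_{j-1})a_j(1-b_ja_j^{-1}b_j^{-1})z_j\otimes(p_1\cdots p_{i-1})y_i\Bigr]\\ &-\sum_{i=1}^{n-1}\Bigl[\sum_{j=1}^{i-1}\Bigl((p_1\cdots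 p_{j-1})(1-a_jb_ja_j^{-1})y_j\otimes(p_1\cdots p_{i-1})a_ib_ia_i^{-1}y_i\\ &\qquad\qquad+(p_1\cdots p_{j-1})a_j(1-b_ja_j^{-1}b_j^{-1})z_j\otimes(p_1\cdots p_{i-1})a_ib_ia_i^{-1}y_i\Bigr)\\ &\qquad+(p_1\cdots p_{i-1})(1-a_ib_ia_i^{-1})y_i\otimes(p_1\cdots p_{i-1})a_ib_ia_i^{-1}y_i\\ &\qquad+(p_1\cdots p_{i-1})a_iz_i\otimes(p_1\cdots p_{i-1})a_ib_ia_i^{-1}y_i\Bigr]\\ &+\sum_{i=1}^{n}\Bigl[\sum_{j=1}^{i-1}\Bigl((p_1\cdots p_{j-1})(1-a_jb_ja_j^{-1})y_j\otimes(p_1\cdots p_{i-1})a_iz_i\\ &\qquad\qquad+(p_1\cdots p_{j-1})a_j(1-b_ja_j^{-1}b_j^{-1})z_j\otimes(p_1\cdots p_{i-1})a_iz_i\Bigr)\\ &\qquad+(p_1\cdots p_{i-1})y_i\otimes(p_1\cdots p_{i-1})a_iz_i\Bigr]\\ &-\sum_{i=1}^{n-1}\Bigl[\sum_{j=1}^{i}\Bigl((p_1\cdots p_{j-1})(1-a_jb_ja_j^{-1})y_j\otimes(p_1\cdots p_i)z_i\\ &\qquad\qquad+(p_1\cdots p_{j-1})a_j(1-b_ja_j^{-1}b_j^{-1})z_j\otimes(p_1\cdots p_i)z_i\Bigr)\Bigr]\\ &-z_n\otimes b_ny_n. \end{align*}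
   Context: Fox derivatives: for a free group on generators $g_1,\dots,g_m$, $\partial/\partial g_i$ is the additive map with $\partial g_j/\partial g_i=\delta_{ij}$ and $\partial(uv)/\partial g_i=\partial u/\partial g_i+u\,\partial v/\partial g_i$, followed by passage to $\mathbb{Z}G$. The complex $P\otimes P$ has $(P\otimes P)_m=\bigoplus_{r+s=m}P_r\otimes_{\mathbb{Z}}P_s$, with $G$ acting diagonally, $g(u\otimes v)=gu\otimes gv$, differential $\partial(u\otimes v)=du\otimes v+(-1)^r u\otimes dv$ for $u\in P_r$, and augmentation $\varepsilon\otimes\varepsilon\colon P_0\otimes P_0\to\mathbb{Z}\otimes\mathbb{Z}\cong\mathbb{Z}$; it is again a free resolution of $\mathbb{Z}$ over $\mathbb{Z}G$. A diagonal approximation is a $\mathbb{Z}G$-chain map $\Delta\colon P\to P\otimes P$ with $(\varepsilon\otimes\varepsilon)\Delta_0=\varepsilon$. For $r+s=m$, $\Delta_{rs}\colon P_m\to P_r\otimes P_s$ denotes $\Delta_m$ followed by the projection onto the summand $P_r\otimes P_s$. Empty products $p_1\cdots p_0$ equal $1$, and empty sums are $0$. *)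

(* Defs.v *)
From HB Require Import structures.
From mathcomp Require Import all_boot all_algebra.
From mathcomp Require Import freeg.

Set Implicit Arguments.
Unset Strict Implicit.
Unset Printing Implicit Defensive.

Import GRing.Theory.
Local Open Scope ring_scope.

Record group_on (G : Type) := GroupOn {
  gmul : G -> G -> G;
  ginv : G -> G;
  gone : G;
  gmulA : forall x y z, gmul x (gmul y z) = gmul (gmul x y) z;
  gmul1 : forall x, gmul gone x = x;
  gmulV : forall x, gmul (ginv x) x = gone }.

Definition group_hom (G H : Type) (GG : group_on G) (HH : group_on H)
  (phi : G -> H) : Prop :=
  forall x y, phi (gmul GG x y) = gmul HH (phi x) (phi y).

(* generators: inl i = a_i, inr i = b_i  (i : 'I_n is the 0-based index) *)
Definition gen (n : nat) := ('I_n + 'I_n)%type.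
(* words in the free group: letters (g, false) = g, (g, true) = g^-1 *)
Definition word (n : nat) := seq (gen n * bool).

Definition letter_val (G : Type) (GG : group_on G) n (t : gen n -> G)
  (l : gen n * bool) : G :=
  if l.2 then ginv GG (t l.1) else t l.1.

Definition eval_word (G : Type) (GG : group_on G) n (t : gen n -> G)
  (w : word n) : G :=
  foldr (fun l acc => gmul GG (letter_val GG t l) acc) (gone GG) w.

Definition pblock n (i : 'I_n) : word n :=
  [:: (inl i, false); (inr i, false); (inl i, true); (inr i, true)].
Definition relator n : word n := flatten [seq pblock i | i <- enum 'I_n].
Definition prefix_word n (k : nat) : word n :=
  flatten [seq pblock i | i <- take k (enum 'I_n)].

Definition is_presentation n (G : Type) (GG : group_on G) (t : gen n -> G) : Prop :=
  eval_word GG t (relator n) = gone GG /\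
  forall (H : Type) (HH : group_on H) (t' : gen n -> H),
    eval_word HH t' (relator n) = gone HH ->
    (exists phi : G -> H, group_hom GG HH phi /\ forall g, phi (t g) = t' g) /\
    (forall phi psi : G -> H, group_hom GG HH phi -> group_hom GG HH psi ->
       (forall g, phi (t g) = t' g) -> (forall g, psi (t g) = t' g) ->
       forall x, phi x = psi x).

(* cells (free generators) of P: x (deg 0), y_i, z_i (deg 1), w (deg 2) *)
Definition cell (n : nat) := ((unit + ('I_n + 'I_n)) + unit)%type.
Definition cX n : cell n := inl (inl tt).
Definition cY n (i : 'I_n) : cell n := inl (inr (inl i)).
Definition cZ n (i : 'I_n) : cell n := inl (inr (inr i)).
Definition cW n : cell n := inr tt.
Definition cdeg n (c : cell n) : nat :=
  match c with inl (inl _) => 0 | inl (inr _) => 1 | inr _ => 2 end%N.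

(* Z G ; the module P = P_0 + P_1 + P_2 (free Z-module on G x cells, i.e.
   the free ZG-module on the cells); P (x)_Z P = free Z-module on pairs. *)
Notation ZG G := {freeg G / int}.
Notation Pmod G n := {freeg (G * cell n) / int}.
Notation PPmod G n := {freeg ((G * cell n) * (G * cell n)) / int}.

Section Resolution.
Context (n : nat) (G : choiceType) (GG : group_on G) (t : gen n -> G).

Local Notation gm := (gmul GG).
Local Notation gi := (ginv GG).
Local Notation a i := (t (inl i)).
Local Notation b i := (t (inr i)).

Definition gr (g : G) : ZG G := << g >>.

Definition act (B : choiceType) (r : ZG G) (u : {freeg (G * B) / int}) :
    {freeg (G * B) / int} :=
  fglift (fun g => fglift (fun k => << (gm g k.1, k.2) >>) u) r.

Definition actPP (r : ZG G) (v : PPmod G n) : PPmod G n :=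
  fglift (fun g => fglift (fun k =>
     << ((gm g k.1.1, k.1.2), (gm g k.2.1, k.2.2)) >>) v) r.

Definition tens (u v : Pmod G n) : PPmod G n :=
  fglift (fun k1 => fglift (fun k2 => << (k1, k2) >>) v) u.

Definition xg : Pmod G n := << (gone GG, cX n) >>.
Definition yg (i : 'I_n) : Pmod G n := << (gone GG, cY i) >>.
Definition zg (i : 'I_n) : Pmod G n := << (gone GG, cZ i) >>.
Definition wg : Pmod G n := << (gone GG, cW n) >>.

Definition lmulZG (h : G) (r : ZG G) : ZG G := fglift (fun k => << gm h k >>) r.

Fixpoint fox (g : gen n) (w : word n) : ZG G :=
  match w with
  | [::] => 0
  | l :: w' =>
      (if l.1 == g then (if l.2 then - gr (gi (t g)) else gr (gone GG)) else 0)
      + lmulZG (letter_val GG t l) (fox g w')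
  end.

Definition dbase (k : G * cell n) : Pmod G n :=
  match k.2 with
  | inl (inl _) => 0
  | inl (inr (inl i)) => << (gm k.1 (a i), cX n) >> - << (k.1, cX n) >>
  | inl (inr (inr i)) => << (gm k.1 (b i), cX n) >> - << (k.1, cX n) >>
  | inr _ => act (gr k.1) (\sum_(i < n)
        (act (fox (inl i) (relator n)) (yg i) + act (fox (inr i) (relator n)) (zg i)))
  end.

Definition dP (u : Pmod G n) : Pmod G n := fglift dbase u.

Definition dPP (v : PPmod G n) : PPmod G n :=
  fglift (fun k => tens (dP << k.1 >>) << k.2 >>
                   + ((-1) ^+ cdeg k.1.2) *: tens << k.1 >> (dP << k.2 >>)) v.

Definition epsP (u : Pmod G n) : int :=
  fglift (fun k => (k.2 == cX n)%:R : int^o) u.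
Definition epsPP (v : PPmod G n) : int :=
  fglift (fun k => ((k.1.2 == cX n) && (k.2.2 == cX n))%:R : int^o) v.

Definition homogP (m : nat) (u : Pmod G n) : bool :=
  all (fun k => cdeg k.2 == m) (dom u).
Definition homogPP (m : nat) (v : PPmod G n) : bool :=
  all (fun k => (cdeg k.1.2 + cdeg k.2.2)%N == m) (dom v).

(* Delta_{rs} : projection onto P_r (x) P_s *)
Definition projPP (r s : nat) (v : PPmod G n) : PPmod G n :=
  fgmap (fun k => (cdeg k.1.2 == r) && (cdeg k.2.2 == s)) id v.

Definition is_diag_approx (D : Pmod G n -> PPmod G n) : Prop :=
  [/\ forall u v, D (u + v) = D u + D v,
      forall r u, D (act r u) = actPP r (D u),
      forall m u, homogP m u -> homogPP m (D u),
      forall u, dPP (D u) = D (dP u)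
    & forall u, homogP 0 u -> epsPP (D u) = epsP u].

Definition pre (k : nat) : G := eval_word GG t (prefix_word n k).

(* (p_1..p_{j-1})(1 - a_j b_j a_j^-1) y_j  (j 0-based) *)
Definition Aj (j : 'I_n) : Pmod G n :=
  act (gr (pre j) - gr (gm (gm (gm (pre j) (a j)) (b j)) (gi (a j)))) (yg j).
(* (p_1..p_{j-1}) a_j (1 - b_j a_j^-1 b_j^-1) z_j *)
Definition Bj (j : 'I_n) : Pmod G n :=
  act (gr (gm (pre j) (a j))
       - gr (gm (gm (gm (gm (pre j) (a j)) (b j)) (gi (a j))) (gi (b j)))) (zg j).
Definition Tj (j : 'I_n) (v : Pmod G n) : PPmod G n := tens (Aj j) v + tens (Bj j) v.

(* (p_1..p_{i-1}) a_i b_i a_i^-1 *)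
Definition cabi (i : 'I_n) : G := gm (gm (gm (pre i) (a i)) (b i)) (gi (a i)).

Definition Delta11_formula : PPmod G n :=
  (\sum_(i < n) \sum_(j < n | (j < i)%N) Tj j (act (gr (pre i)) (yg i)))
  - (\sum_(i < n | (i.+1 < n)%N)
       ((\sum_(j < n | (j < i)%N) Tj j (act (gr (cabi i)) (yg i)))
        + tens (Aj i) (act (gr (cabi i)) (yg i))
        + tens (act (gr (gm (pre i) (a i))) (zg i)) (act (gr (cabi i)) (yg i))))
  + (\sum_(i < n)
       ((\sum_(j < n | (j < i)%N) Tj j (act (gr (gm (pre i) (a i))) (zg i)))
        + tens (act (gr (pre i)) (yg i)) (act (gr (gm (pre i) (a i))) (zg i))))
  - (\sum_(i < n | (i.+1 < n)%N)
       \sum_(j < n | (j <= i)%N) Tj j (act (gr (pre i.+1)) (zg i)))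
  - (\sum_(i < n | i.+1 == n) tens (zg i) (act (gr (b i)) (yg i))).

End Resolution.

(* Main.v *)
Require Import Defs.
From HB Require Import structures.
From mathcomp Require Import all_boot all_algebra.
From mathcomp Require Import freeg.
Import GRing.Theory.
Local Open Scope ring_scope.

Section Generic.
Context (U V : zmodType) (F : U -> V) (Fm : {morph F : x y / x + y}).
Lemma morph0 : F 0 = 0.
Proof. by apply: (@addrI _ (F 0)); rewrite addr0 -Fm addr0. Qed.
Lemma morphN x : F (- x) = - F x.
Proof. by apply: (@addrI _ (F x)); rewrite -Fm !subrr morph0. Qed.
Lemma morphB x y : F (x - y) = F x - F y.
Proof. by rewrite Fm morphN. Qed.
Lemma morph_zmod : zmod_morphism F.
Proof. by move=> x y; rewrite morphB. Qed.
Lemma morph_mulz x (k : int) : F (x *~ k) = F x *~ k.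
Proof.
have hp : forall n : nat, F (x *~ n) = F x *~ n.
  elim=> [|j IH]; first by rewrite !mulr0z morph0.
  by rewrite -[x *~ _]pmulrn -[F x *~ _]pmulrn !mulrS Fm pmulrn IH -pmulrn.
case: k => j; first exact: hp.
by rewrite NegzE !mulrNz morphN hp.
Qed.
End Generic.
Arguments morph0 {U V F}.
Arguments morphN {U V F}.
Arguments morphB {U V F}.
Arguments morph_zmod {U V F}.
Arguments morph_mulz {U V F}.

HB.instance Definition _ (K : choiceType) (M : lmodType int) (f : K -> M) :=
  GRing.isZmodMorphism.Build {freeg K / int} M (fglift f) (lift_is_additive f).

Lemma lift1 (K : choiceType) (M : lmodType int) (f : K -> M) k : fglift f << k >> = f k.
Proof. by rewrite liftU scale1r. Qed.

Lemma fg_ext (K : choiceType) (V : zmodType) (F1 F2 : {freeg K / int} -> V) :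
  {morph F1 : x y / x + y} -> {morph F2 : x y / x + y} ->
  (forall k, F1 << k >> = F2 << k >>) -> forall D, F1 D = F2 D.
Proof.
move=> h1 h2 hb; elim/freeg_ind_dom0 => [|k x D _ _ IH]; first by rewrite !morph0.
have -> : << k *g x >> = << x >> *~ k by rewrite freegU_mulz intz.
by rewrite h1 h2 IH !morph_mulz // hb.
Qed.

Lemma lift_funD (K : choiceType) (M : lmodType int) (f g : K -> M) D :
  fglift (fun k => f k + g k) D = fglift f D + fglift g D.
Proof.
apply: (@fg_ext _ _ (fglift _) (fun D => fglift f D + fglift g D)) => //.
- by move=> x y; rewrite raddfD.
- by move=> x y; rewrite !raddfD addrACA.
- by move=> k; rewrite !lift1.
Qed.
Section Grp.
Context (G : choiceType) (GG : group_on G).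
Local Notation gm := (gmul GG).
Local Notation gi := (ginv GG).
Local Notation g1 := (gone GG).

Lemma mulgV' x : gm x (gi x) = g1.
Proof.
have e : gm (gi (gi x)) (gi x) = g1 := gmulV _ _.
rewrite -(gmul1 GG (gm x (gi x))) -{1}e -gmulA (gmulA _ (gi x)) gmulV gmul1 //.
Qed.
Lemma mulg1' x : gm x g1 = x.
Proof. by rewrite -(gmulV GG x) gmulA mulgV' gmul1. Qed.

Lemma act_basis (B : choiceType) g (h : G) (c : B) :
  act GG (gr g) << (h, c) >> = << (gm g h, c) >>.
Proof. by rewrite /act /gr !lift1. Qed.

Lemma act_gr (B : choiceType) g (u : {freeg (G * B) / int}) :
  act GG (gr g) u = fglift (fun k => << (gm g k.1, k.2) >>) u.
Proof. by rewrite /act /gr lift1. Qed.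

Lemma act_addl (B : choiceType) (r : ZG G) :
  {morph (act GG (B:=B) r) : x y / x + y}.
Proof.
move=> u v.
apply: (@fg_ext _ _ (fun r => act GG r (u + v)) (fun r => act GG r u + act GG r v)) => //.
- by move=> x y; rewrite /act raddfD.
- by move=> x y; rewrite /act !raddfD addrACA.
- by move=> k; rewrite /act !lift1 raddfD.
Qed.

Lemma actD (B : choiceType) (r : ZG G) (u v : {freeg (G * B) / int}) :
  act GG r (u + v) = act GG r u + act GG r v.
Proof. exact: act_addl. Qed.
Lemma act0 (B : choiceType) (r : ZG G) : act GG r (0 : {freeg (G * B) / int}) = 0.
Proof. exact: morph0 (act_addl _ r). Qed.
Lemma actN (B : choiceType) (r : ZG G) (u : {freeg (G * B) / int}) :
  act GG r (- u) = - act GG r u.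
Proof. exact: (morphN (act_addl _ r) u). Qed.
Lemma actB (B : choiceType) (r : ZG G) (u v : {freeg (G * B) / int}) :
  act GG r (u - v) = act GG r u - act GG r v.
Proof. exact: (morphB (act_addl _ r) u v). Qed.
Lemma act_sum (B : choiceType) (r : ZG G) (I : Type) (s : seq I) (P : pred I) (F : I -> {freeg (G * B) / int}) :
  act GG r (\sum_(i <- s | P i) F i) = \sum_(i <- s | P i) act GG r (F i).
Proof. exact: (big_morph _ (act_addl _ r) (act0 _ r)). Qed.

Lemma actDr (B : choiceType) (r1 r2 : ZG G) (u : {freeg (G * B) / int}) :
  act GG (r1 + r2) u = act GG r1 u + act GG r2 u.
Proof. by rewrite /act raddfD. Qed.
Lemma actNr (B : choiceType) (r : ZG G) (u : {freeg (G * B) / int}) :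
  act GG (- r) u = - act GG r u.
Proof. by rewrite /act raddfN. Qed.
Lemma actBr (B : choiceType) (r1 r2 : ZG G) (u : {freeg (G * B) / int}) :
  act GG (r1 - r2) u = act GG r1 u - act GG r2 u.
Proof. by rewrite /act raddfB. Qed.
Lemma act0r (B : choiceType) (u : {freeg (G * B) / int}) :
  act GG 0 u = 0.
Proof. by rewrite /act raddf0. Qed.

Lemma act_comp (B : choiceType) g h (u : {freeg (G * B) / int}) :
  act GG (gr g) (act GG (gr h) u) = act GG (gr (gm g h)) u.
Proof.
apply: (@fg_ext _ _ (fun u => act GG (gr g) (act GG (gr h) u)) (act GG (gr (gm g h)))).
- by move=> x y; rewrite !(raddfD, actD).
- by move=> x y; rewrite !(raddfD, actD).
- by case=> k c; rewrite !act_basis gmulA.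
Qed.

Lemma act1 (B : choiceType) (u : {freeg (G * B) / int}) : act GG (gr g1) u = u.
Proof.
apply: (@fg_ext _ _ (act GG (gr g1)) id) => //.
- by move=> x y; rewrite !(raddfD, actD).
- by case=> k c; rewrite act_basis gmul1.
Qed.

Lemma act_lmul (B : choiceType) h r (u : {freeg (G * B) / int}) :
  act GG (lmulZG GG h r) u = act GG (gr h) (act GG r u).
Proof.
apply: (@fg_ext _ _ (fun r => act GG (lmulZG GG h r) u) (fun r => act GG (gr h) (act GG r u))).
- by move=> x y; rewrite /lmulZG raddfD actDr.
- by move=> x y; rewrite actDr actD.
- by move=> k; rewrite /lmulZG lift1 -act_comp.
Qed.

End Grp.

Ltac pull t e :=
  lazymatch e with
  | ?y + ?r => tryif unify y t then idtac else
       (pull t r; first [rewrite (addrCA y t) | rewrite (addrC y t)])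
  | ?y => unify y t
  end.

Ltac zcancel :=
  repeat match goal with
  | |- - ?x + ?r = 0 => pull x r; first [rewrite addKr | rewrite addNr]
  | |- ?x + ?r = 0 => pull (- x) r; first [rewrite addNKr | rewrite subrr]
  end.

Ltac zprep := apply/eqP; rewrite -subr_eq0; apply/eqP;
  rewrite ?opprD ?opprK ?oppr0 -?addrA ?addr0 ?add0r.

Ltac zsolve := zprep; zcancel; try done.

Section Tens.
Context (n : nat) (G : choiceType) (GG : group_on G).
Local Notation gm := (gmul GG).
Local Notation gi := (ginv GG).
Local Notation g1 := (gone GG).
Local Notation P := (Pmod G n).
Local Notation PP := (PPmod G n).

Lemma tens_basis k1 k2 : tens << k1 >> << k2 >> = << (k1, k2) >> :> PP.
Proof. by rewrite /tens !lift1. Qed.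

Lemma tens_addl (v : P) : {morph (fun u : P => tens u v) : x y / x + y}.
Proof. by move=> x y; rewrite /tens raddfD. Qed.
Lemma tens_addr (u : P) : {morph (fun v : P => tens u v) : x y / x + y}.
Proof.
move=> x y.
apply: (@fg_ext _ _ (fun u => tens u (x + y)) (fun u => tens u x + tens u y)) => //.
- by move=> p q; rewrite /tens !raddfD.
- by move=> p q; rewrite /tens !raddfD addrACA.
- by move=> k; rewrite /tens !lift1 raddfD.
Qed.

Lemma tensDl (u1 u2 v : P) : tens (u1 + u2) v = tens u1 v + tens u2 v.
Proof. exact: tens_addl. Qed.
Lemma tensNl (u v : P) : tens (- u) v = - tens u v.
Proof. exact: (morphN (tens_addl v)). Qed.
Lemma tensBl (u1 u2 v : P) : tens (u1 - u2) v = tens u1 v - tens u2 v.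
Proof. exact: (morphB (tens_addl v)). Qed.
Lemma tens0l (v : P) : tens 0 v = 0.
Proof. exact: (morph0 (tens_addl v)). Qed.
Lemma tens_suml (I : Type) (s : seq I) (Q : pred I) (F : I -> P) (v : P) :
  tens (\sum_(i <- s | Q i) F i) v = \sum_(i <- s | Q i) tens (F i) v.
Proof. exact: (big_morph _ (tens_addl v) (tens0l v)). Qed.
Lemma tensDr (u v1 v2 : P) : tens u (v1 + v2) = tens u v1 + tens u v2.
Proof. exact: tens_addr. Qed.
Lemma tensNr (u v : P) : tens u (- v) = - tens u v.
Proof. exact: (morphN (tens_addr u)). Qed.
Lemma tensBr (u v1 v2 : P) : tens u (v1 - v2) = tens u v1 - tens u v2.
Proof. exact: (morphB (tens_addr u)). Qed.
Lemma tens0r (u : P) : tens u 0 = 0.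
Proof. exact: (morph0 (tens_addr u)). Qed.
Lemma tens_sumr (I : Type) (s : seq I) (Q : pred I) (F : I -> P) (u : P) :
  tens u (\sum_(i <- s | Q i) F i) = \sum_(i <- s | Q i) tens u (F i).
Proof. exact: (big_morph _ (tens_addr u) (tens0r u)). Qed.

Lemma scale_int_mulz (V : lmodType int) (c : int) (v : V) : c *: v = v *~ c.
Proof. by rewrite -{1}[c]intz scaler_int. Qed.

Lemma tensZl (c : int) (u v : P) : tens (c *: u) v = c *: tens u v.
Proof. by rewrite !scale_int_mulz (morph_mulz (tens_addl v)). Qed.
Lemma tensZr (c : int) (u v : P) : tens u (c *: v) = c *: tens u v.
Proof. by rewrite !scale_int_mulz (morph_mulz (tens_addr u)). Qed.

Lemma actPP_basis g h1 c1 h2 c2 :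
  actPP GG (gr g) << ((h1, c1), (h2, c2)) >> = << ((gm g h1, c1), (gm g h2, c2)) >> :> PP.
Proof. by rewrite /actPP /gr !lift1. Qed.

Lemma actPP_add (r : ZG G) : {morph (actPP (n:=n) GG r) : x y / x + y}.
Proof.
move=> u v.
apply: (@fg_ext _ _ (fun r => actPP GG r (u + v)) (fun r => actPP GG r u + actPP GG r v)) => //.
- by move=> x y; rewrite /actPP raddfD.
- by move=> x y; rewrite /actPP !raddfD addrACA.
- by move=> k; rewrite /actPP !lift1 raddfD.
Qed.

Lemma actPPD (r : ZG G) (u v : PP) : actPP GG r (u + v) = actPP GG r u + actPP GG r v.
Proof. exact: actPP_add. Qed.
Lemma actPP0 (r : ZG G) : actPP GG r (0 : PP) = 0.
Proof. exact: (morph0 (actPP_add r)). Qed.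
Lemma actPPN (r : ZG G) (u : PP) : actPP GG r (- u) = - actPP GG r u.
Proof. exact: (morphN (actPP_add r)). Qed.
Lemma actPPB (r : ZG G) (u v : PP) : actPP GG r (u - v) = actPP GG r u - actPP GG r v.
Proof. exact: (morphB (actPP_add r)). Qed.
Lemma actPPZ (r : ZG G) (c : int) (u : PP) : actPP GG r (c *: u) = c *: actPP GG r u.
Proof. by rewrite !scale_int_mulz (morph_mulz (actPP_add r)). Qed.
Lemma actPPDr (r1 r2 : ZG G) (u : PP) : actPP GG (r1 + r2) u = actPP GG r1 u + actPP GG r2 u.
Proof. by rewrite /actPP raddfD. Qed.

Lemma actPP_tens g (u v : P) :
  actPP GG (gr g) (tens u v) = tens (act GG (gr g) u) (act GG (gr g) v).
Proof.
apply: (@fg_ext _ _ (fun u => actPP GG (gr g) (tens u v)) (fun u => tens (act GG (gr g) u) (act GG (gr g) v))).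
- by move=> x y; rewrite tensDl actPPD.
- by move=> x y; rewrite actD tensDl.
move=> [h1 c1].
apply: (@fg_ext _ _ (fun v => actPP GG (gr g) (tens << (h1, c1) >> v)) (fun v => tens (act GG (gr g) << (h1, c1) >>) (act GG (gr g) v))).
- by move=> x y; rewrite tensDr actPPD.
- by move=> x y; rewrite actD tensDr.
by move=> [h2 c2]; rewrite !act_basis !tens_basis actPP_basis.
Qed.

Lemma actPP_comp g h (v : PP) :
  actPP GG (gr g) (actPP GG (gr h) v) = actPP GG (gr (gm g h)) v.
Proof.
apply: (@fg_ext _ _ (fun v => actPP GG (gr g) (actPP GG (gr h) v)) (actPP GG (gr (gm g h)))).
- by move=> x y; rewrite !actPPD.
- by move=> x y; rewrite !actPPD.
by move=> [[h1 c1] [h2 c2]]; rewrite !actPP_basis !gmulA.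
Qed.

Lemma actPP1 (v : PP) : actPP GG (gr g1) v = v.
Proof.
apply: (@fg_ext _ _ (actPP (n:=n) GG (gr g1)) id) => //.
- by move=> x y; rewrite actPPD.
by move=> [[h1 c1] [h2 c2]]; rewrite !actPP_basis !gmul1.
Qed.

End Tens.

Section Main.
Context (m : nat) (G : choiceType) (GG : group_on G) (t : gen m.+1 -> G).
Local Notation n := m.+1.
Local Notation gm := (gmul GG).
Local Notation gi := (ginv GG).
Local Notation g1 := (gone GG).
Local Notation a i := (t (inl i)).
Local Notation b i := (t (inr i)).
Local Notation P := (Pmod G n).
Local Notation PP := (PPmod G n).
Local Notation x0 := (xg n GG).

Definition D0 (c : cell n) : PP :=
  match c with
  | inl (inl _) => tens x0 x0
  | inl (inr (inl i)) => tens (yg GG i) (act GG (gr (a i)) x0) + tens x0 (yg GG i)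
  | inl (inr (inr i)) => tens (zg GG i) (act GG (gr (b i)) x0) + tens x0 (zg GG i)
  | inr _ => tens (wg n GG) << (gm (b ord_max) (a ord_max), cX n) >>
             + Delta11_formula GG t + tens x0 (wg n GG)
  end.

Definition Dm (u : P) : PP := fglift (fun k => actPP GG (gr k.1) (D0 k.2)) u.

Lemma Dm_basis g c : Dm << (g, c) >> = actPP GG (gr g) (D0 c).
Proof. by rewrite /Dm lift1. Qed.

Lemma Dm_add : {morph Dm : x y / x + y}.
Proof. by move=> x y; rewrite /Dm raddfD. Qed.

Lemma Dm_act (r : ZG G) (u : P) : Dm (act GG r u) = actPP GG r (Dm u).
Proof.
apply: (@fg_ext _ _ (fun r => Dm (act GG r u)) (fun r => actPP GG r (Dm u))).
- by move=> x y; rewrite actDr Dm_add.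
- by move=> x y; rewrite actPPDr.
move=> g.
apply: (@fg_ext _ _ (fun u => Dm (act GG (gr g) u)) (fun u => actPP GG (gr g) (Dm u))).
- by move=> x y; rewrite actD !Dm_add.
- by move=> x y; rewrite Dm_add actPPD.
by move=> [h c]; rewrite act_basis !Dm_basis actPP_comp.
Qed.

Lemma dP_add : {morph (dP GG t) : x y / x + y}.
Proof. by move=> x y; rewrite /dP raddfD. Qed.

Lemma dP_basis k : dP GG t << k >> = dbase GG t k.
Proof. by rewrite /dP lift1. Qed.

Lemma dP_act g (u : P) : dP GG t (act GG (gr g) u) = act GG (gr g) (dP GG t u).
Proof.
apply: (@fg_ext _ _ (fun u => dP GG t (act GG (gr g) u)) (fun u => act GG (gr g) (dP GG t u))).
- by move=> x y; rewrite actD !dP_add.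
- by move=> x y; rewrite dP_add actD.
move=> [h [[[]|[i|i]]|[]]]; rewrite act_basis !dP_basis /dbase /=.
- by rewrite act0.
- by rewrite actB !act_basis gmulA.
- by rewrite actB !act_basis gmulA.
- by rewrite act_comp.
Qed.

Definition tw (u : P) : P := fglift (fun k => ((-1) ^+ cdeg k.2) *: << k >>) u.

Lemma dPP_tens (u v : P) :
  dPP GG t (tens u v) = tens (dP GG t u) v + tens (tw u) (dP GG t v).
Proof.
apply: (@fg_ext _ _ (fun u => dPP GG t (tens u v)) (fun u => tens (dP GG t u) v + tens (tw u) (dP GG t v))).
- by move=> x y; rewrite tensDl /dPP raddfD.
- by move=> x y; rewrite dP_add /tw raddfD !tensDl addrACA.
move=> k1.
apply: (@fg_ext _ _ (fun v => dPP GG t (tens << k1 >> v)) (fun v => tens (dP GG t << k1 >>) v + tens (tw << k1 >>) (dP GG t v))).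
- by move=> x y; rewrite tensDr /dPP raddfD.
- by move=> x y; rewrite dP_add !tensDr addrACA.
by move=> k2; rewrite tens_basis /dPP /tw !lift1 tensZl.
Qed.

Lemma dPP_add : {morph (dPP GG t) : x y / x + y}.
Proof. by move=> x y; rewrite /dPP raddfD. Qed.

Lemma dPP_actPP g (v : PP) : dPP GG t (actPP GG (gr g) v) = actPP GG (gr g) (dPP GG t v).
Proof.
apply: (@fg_ext _ _ (fun v => dPP GG t (actPP GG (gr g) v)) (fun v => actPP GG (gr g) (dPP GG t v))).
- by move=> x y; rewrite actPPD dPP_add.
- by move=> x y; rewrite dPP_add actPPD.
move=> [[h1 c1] [h2 c2]]; rewrite actPP_basis /dPP !lift1 /= actPPD actPPZ !actPP_tens.
by rewrite -!dP_act !act_basis.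
Qed.

Definition cellof (s : gen n) : cell n :=
  match s with inl i => cY i | inr i => cZ i end.
Definition el (l : gen n * bool) : P :=
  if l.2 then - << (gi (t l.1), cellof l.1) >> else << (g1, cellof l.1) >>.
Local Notation lv l := (letter_val GG t l).
Local Notation ev u := (eval_word GG t u).

Fixpoint Cw (u : word n) : P :=
  match u with [::] => 0 | l :: u' => el l + act GG (gr (lv l)) (Cw u') end.
Fixpoint Qw (u : word n) : PP :=
  match u with
  | [::] => 0
  | l :: u' => (if l.2 then tens (el l) (el l) else 0)
               + tens (el l) (act GG (gr (lv l)) (Cw u')) + actPP GG (gr (lv l)) (Qw u')
  end.

Lemma dP_C u : dP GG t (Cw u) = << (ev u, cX n) >> - x0.
Proof.
elim: u => [|l u IH] /=; first by rewrite /dP raddf0 /xg subrr.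
rewrite dP_add dP_act IH actB /xg !act_basis. rewrite (mulg1' _ GG) /el.
case: l => [[i|i] []]; rewrite /= ?(morphN dP_add) dP_basis /dbase /=.
- by rewrite /letter_val /= gmulV; zsolve.
- by rewrite /letter_val /= gmul1; zsolve.
- by rewrite /letter_val /= gmulV; zsolve.
- by rewrite /letter_val /= gmul1; zsolve.
Qed.


Lemma actZ (B : choiceType) (r : ZG G) (c : int) (u : {freeg (G * B) / int}) :
  act GG r (c *: u) = c *: act GG r u.
Proof. by rewrite !scale_int_mulz (morph_mulz (@act_addl _ GG _ r)). Qed.

Lemma tw_add : {morph tw : x y / x + y}.
Proof. by move=> x y; rewrite /tw raddfD. Qed.

Lemma tw_act g (u : P) : tw (act GG (gr g) u) = act GG (gr g) (tw u).
Proof.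
apply: (@fg_ext _ _ (fun u => tw (act GG (gr g) u)) (fun u => act GG (gr g) (tw u))).
- by move=> x y; rewrite actD tw_add.
- by move=> x y; rewrite tw_add actD.
by move=> [h c]; rewrite act_basis /tw !lift1 actZ act_basis.
Qed.

Lemma tw_basis k : tw << k >> = ((-1) ^+ cdeg k.2) *: << k >>.
Proof. by rewrite /tw lift1. Qed.

Lemma tw_el l : tw (el l) = - el l.
Proof.
by case: l => [[i|i] []]; rewrite /el /= ?(morphN tw_add) /tw lift1 /= expr1 scaleN1r.
Qed.

Lemma tw_C u : tw (Cw u) = - Cw u.
Proof.
elim: u => [|l u IH] /=; first by rewrite (morph0 tw_add) oppr0.
by rewrite tw_add tw_act IH tw_el actN opprD.
Qed.

Lemma fox_C u :
  \sum_(i < n) (act GG (fox GG t (inl i) u) (yg GG i) + act GG (fox GG t (inr i) u) (zg GG i))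
  = Cw u.
Proof.
elim: u => [|l u IH] /=.
  by rewrite big1 // => i _; rewrite !act0r addr0.
rewrite -IH act_sum.
under eq_bigr => i _ do rewrite /= !actDr !act_lmul addrACA -actD.
rewrite big_split /=; congr (_ + _).
case: l => [[i0|i0] bo] /=.
- rewrite (bigD1 i0) //= big1 => [|j hj]; last first.
    have -> : (inl i0 == inl j :> gen n) = false.
      by apply/negbTE; apply/eqP => -[e]; rewrite e eqxx in hj.
    by rewrite !act0r !add0r.
  rewrite eqxx act0r addr0 /el /=.
  case: bo => /=; last by rewrite act1 addr0 /yg.
  by rewrite actNr /yg act_basis mulg1' addr0.
- rewrite (bigD1 i0) //= big1 => [|j hj]; last first.
    have -> : (inr i0 == inr j :> gen n) = false.
      by apply/negbTE; apply/eqP => -[e]; rewrite e eqxx in hj.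
    by rewrite !act0r !add0r.
  rewrite eqxx act0r add0r addr0 /el /=.
  case: bo => /=; last by rewrite act1 /zg.
  by rewrite actNr /zg act_basis mulg1'.
Qed.

Lemma Qw_chain u :
  dPP GG t (Qw u) = Dm (Cw u) - tens x0 (Cw u) - tens (Cw u) << (ev u, cX n) >>.
Proof.
elim: u => [|l u IH] /=.
  by rewrite /dPP raddf0 (morph0 Dm_add) tens0r tens0l !subr0.
rewrite !dPP_add dPP_actPP IH !actPPB dPP_tens dP_act dP_C tw_el Dm_add Dm_act.
rewrite !actPP_tens !tensDl !tensDr.
case: l => [[i|i] []]; rewrite /el /letter_val /= ?dPP_tens ?(morphN dP_add) ?(morphN tw_add)
  ?(morphN Dm_add) ?dP_basis /dbase /= ?Dm_basis /= ?tw_el /el /= /xg /yg /zg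
  ?actPPD !actPP_tens ?actB !act_basis ?tensNl ?tensNr ?tensBl ?tensBr ?tensDl ?tensDr
  ?tw_basis /= ?expr1 ?scaleN1r ?(morph0 dPP_add) ?tensNl ?tensNr
  !tens_basis ?(mulg1' _ GG) ?gmulV ?gmul1 ?opprK ?add0r.
all: zsolve.
Qed.

Lemma ev_cat u v : ev (u ++ v) = gm (ev u) (ev v).
Proof.
elim: u => [|l u IH] /=; first by rewrite gmul1.
by rewrite IH gmulA.
Qed.

Lemma Cw_cat u v : Cw (u ++ v) = Cw u + act GG (gr (ev u)) (Cw v).
Proof.
elim: u => [|l u IH] /=; first by rewrite act1 add0r.
by rewrite IH actD act_comp addrA.
Qed.

Lemma Qw_cat u v : Qw (u ++ v) =
  Qw u + tens (Cw u) (act GG (gr (ev u)) (Cw v)) + actPP GG (gr (ev u)) (Qw v).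
Proof.
elim: u => [|l u IH] /=; first by rewrite tens0l actPP1 !add0r.
rewrite IH Cw_cat !actD !actPPD act_comp actPP_tens act_comp actPP_comp.
rewrite !tensDr !tensDl; zsolve.
Qed.

Lemma prefix_succ (i : 'I_n) : prefix_word n i.+1 = prefix_word n i ++ Defs.pblock i.
Proof.
by rewrite /prefix_word (take_nth i) ?size_enum_ord ?ltn_ord // nth_ord_enum map_rcons flatten_rcons.
Qed.

Lemma prefix0 : prefix_word n 0 = [::].
Proof. by rewrite /prefix_word take0. Qed.

Lemma pre_succ (i : 'I_n) :
  pre GG t i.+1 = gm (gm (gm (gm (pre GG t i) (a i)) (b i)) (gi (a i))) (gi (b i)).
Proof. by rewrite /pre prefix_succ ev_cat /= /letter_val /= (mulg1' _ GG) !gmulA. Qed.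

Definition Sn (k : nat) : P := \sum_(j < n | (j < k)%N) (Aj GG t j + Bj GG t j).

Lemma ltS_ord (k : nat) (i : 'I_n) (hi : nat_of_ord i = k) (j : 'I_n) :
  ((j < k.+1)%N && (j != i)) = (j < k)%N.
Proof.
rewrite -(inj_eq val_inj) /= hi ltnS leq_eqVlt.
by case: ltngtP.
Qed.

Lemma Sn_succ (i : 'I_n) : Sn i.+1 = Sn i + (Aj GG t i + Bj GG t i).
Proof.
rewrite /Sn (bigD1 i) ?ltnSn //= addrC; congr (_ + _).
by apply: eq_bigl => j; rewrite ltS_ord.
Qed.

Lemma Sn0 : Sn 0 = 0.
Proof. by rewrite /Sn big_pred0. Qed.

Lemma C_block (i : 'I_n) :
  act GG (gr (pre GG t i)) (Cw (Defs.pblock i)) = Aj GG t i + Bj GG t i.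
Proof.
rewrite /Aj /Bj /= /el /letter_val /= /yg /zg !actBr !actD !actN !act0 !act_comp !act_basis ?addr0 ?(mulg1' _ GG) ?gmulA.
zsolve.
Qed.

Lemma C_prefix (k : nat) : (k <= n)%N -> Cw (prefix_word n k) = Sn k.
Proof.
elim: k => [|k IH] hk; first by rewrite prefix0 Sn0.
have hk' : (k < n)%N by [].
rewrite -[k]/(nat_of_ord (Ordinal hk')) prefix_succ Cw_cat Sn_succ IH ?(ltnW hk') //.
by rewrite -C_block.
Qed.

Definition Gj (j : 'I_n) : PP :=
  tens (Sn j) (act GG (gr (pre GG t j)) (Cw (Defs.pblock j)))
  + actPP GG (gr (pre GG t j)) (Qw (Defs.pblock j)).

Lemma Q_prefix (k : nat) : (k <= n)%N -> Qw (prefix_word n k) = \sum_(j < n | (j < k)%N) Gj j.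
Proof.
elim: k => [|k IH] hk; first by rewrite prefix0 big_pred0.
have hk' : (k < n)%N by [].
rewrite -[k]/(nat_of_ord (Ordinal hk')) prefix_succ Qw_cat IH ?(ltnW hk') //.
rewrite C_prefix ?(ltnW hk') //.
rewrite [RHS](bigD1 (Ordinal hk')) ?ltnSn //= [RHS]addrC -addrA; congr (_ + _).
by apply: eq_bigl => j; rewrite ltS_ord.
Qed.

Definition FA (i : 'I_n) : PP := tens (Sn i) (act GG (gr (pre GG t i)) (yg GG i)).
Definition FB (i : 'I_n) : PP :=
  tens (Sn i) (act GG (gr (cabi GG t i)) (yg GG i))
  + tens (Aj GG t i) (act GG (gr (cabi GG t i)) (yg GG i))
  + tens (act GG (gr (gm (pre GG t i) (a i))) (zg GG i)) (act GG (gr (cabi GG t i)) (yg GG i)).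
Definition FC (i : 'I_n) : PP :=
  tens (Sn i) (act GG (gr (gm (pre GG t i) (a i))) (zg GG i))
  + tens (act GG (gr (pre GG t i)) (yg GG i)) (act GG (gr (gm (pre GG t i) (a i))) (zg GG i)).
Definition FD (i : 'I_n) : PP := tens (Sn i.+1) (act GG (gr (pre GG t i.+1)) (zg GG i)).

Ltac expand := rewrite ?(actBr, actD, actN, act0, act_comp, act_basis, actPPD, actPPN, actPP0,
  actPP_tens, tensDl, tensDr, tensNl, tensNr, tensBl, tensBr, tens0l, tens0r, addr0, add0r, oppr0).

Lemma Gj_formula (j : 'I_n) : Gj j = FA j - FB j + FC j - FD j.
Proof.
rewrite /Gj /FA /FB /FC /FD Sn_succ pre_succ /cabi /Aj /Bj /= /el /letter_val /= /yg /zg.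
expand.
rewrite ?(mulg1' _ GG) ?gmulA.
zsolve.
Qed.

Lemma sumT (k : nat) (v : P) :
  \sum_(j < n | (j < k)%N) Tj GG t j v = tens (Sn k) v.
Proof. by rewrite /Sn tens_suml; apply: eq_bigr => j _; rewrite /Tj tensDl. Qed.

Lemma sumT' (k : nat) (v : P) :
  \sum_(j < n | (j <= k)%N) Tj GG t j v = tens (Sn k.+1) v.
Proof. by rewrite -sumT; apply: eq_bigl => j; rewrite ltnS. Qed.

Lemma sum_but_last (F : 'I_n -> PP) :
  \sum_(i < n | (i.+1 < n)%N) F i = \sum_(i < n) F i - F ord_max.
Proof.
rewrite [in RHS](bigD1 ord_max) //= addrC addrK; apply: eq_bigl => i.
by rewrite -(inj_eq val_inj) /= ltnS ltn_neqAle -ltnS ltn_ord andbT.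
Qed.

Lemma last_only (F : 'I_n -> PP) :
  \sum_(i < n | i.+1 == n) F i = F ord_max.
Proof. by rewrite (big_pred1 ord_max) // => i; rewrite /= eqSS -(inj_eq val_inj). Qed.

Lemma relE : relator n = prefix_word n n.
Proof. by rewrite /prefix_word take_oversize ?size_enum_ord. Qed.

Lemma cabi_last (hrel : ev (relator n) = g1) : cabi GG t ord_max = b ord_max.
Proof.
have h : gm (cabi GG t ord_max) (gi (b ord_max)) = g1.
  by rewrite /cabi -pre_succ /pre /= -relE.
by rewrite -[cabi _ _ _](mulg1' _ GG) -(gmulV GG (b ord_max)) gmulA h gmul1.
Qed.

Lemma key_last (hrel : ev (relator n) = g1) :
  FB ord_max + FD ord_max - tens (zg GG ord_max) (act GG (gr (b ord_max)) (yg GG ord_max))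
  = tens (Sn n) (act GG (gr (b ord_max)) (yg GG ord_max) + zg GG ord_max).
Proof.
have SnE : Sn n = Sn ord_max + (Aj GG t ord_max + Bj GG t ord_max) := Sn_succ ord_max.
have preE : pre GG t (@ord_max m).+1 = g1 by rewrite /pre /= -relE.
rewrite /FB /FD cabi_last // SnE preE /Bj -pre_succ preE act1 /Aj /yg /zg.
expand.
rewrite ?(mulg1' _ GG) ?gmul1.
zsolve.
Qed.

Lemma formula_eq (hrel : ev (relator n) = g1) :
  Delta11_formula GG t = Qw (relator n)
    + tens (Sn n) (act GG (gr (b ord_max)) (yg GG ord_max) + zg GG ord_max).
Proof.
rewrite -key_last // relE Q_prefix //.
have -> : \sum_(j < n | (j < n)%N) Gj j = \sum_(j < n) (FA j - FB j + FC j - FD j).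
  by rewrite big_mkcond; apply: eq_bigr => j _; rewrite ltn_ord Gj_formula.
rewrite sumrB big_split sumrB /=.
rewrite /Delta11_formula.
have -> : \sum_(i < n) \sum_(j < n | (j < i)%N) Tj GG t j (act GG (gr (pre GG t i)) (yg GG i))
   = \sum_(i < n) FA i by apply: eq_bigr => i _; rewrite sumT.
have -> : \sum_(i < n | (i.+1 < n)%N)
       ((\sum_(j < n | (j < i)%N) Tj GG t j (act GG (gr (cabi GG t i)) (yg GG i)))
        + tens (Aj GG t i) (act GG (gr (cabi GG t i)) (yg GG i))
        + tens (act GG (gr (gm (pre GG t i) (a i))) (zg GG i)) (act GG (gr (cabi GG t i)) (yg GG i)))
   = \sum_(i < n) FB i - FB ord_max.
  by rewrite -sum_but_last; apply: eq_bigr => i _; rewrite sumT.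
have -> : \sum_(i < n)
       ((\sum_(j < n | (j < i)%N) Tj GG t j (act GG (gr (gm (pre GG t i) (a i))) (zg GG i)))
        + tens (act GG (gr (pre GG t i)) (yg GG i)) (act GG (gr (gm (pre GG t i) (a i))) (zg GG i)))
   = \sum_(i < n) FC i by apply: eq_bigr => i _; rewrite sumT.
have -> : \sum_(i < n | (i.+1 < n)%N)
       \sum_(j < n | (j <= i)%N) Tj GG t j (act GG (gr (pre GG t i.+1)) (zg GG i))
   = \sum_(i < n) FD i - FD ord_max.
  by rewrite -sum_but_last; apply: eq_bigr => i _; rewrite sumT'.
rewrite last_only.
zsolve.
Qed.



Lemma Dm_g1 c : Dm << (g1, c) >> = D0 c.
Proof. by rewrite Dm_basis actPP1. Qed.

Lemma dP_wg : dP GG t (wg n GG) = Cw (relator n).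
Proof. by rewrite /wg dP_basis /dbase /= act1 fox_C. Qed.

Lemma Sn_rel : Sn n = Cw (relator n).
Proof. by rewrite relE C_prefix. Qed.

Lemma chain_basis (hrel : ev (relator n) = g1) c :
  dPP GG t (D0 c) = Dm (dP GG t << (g1, c) >>).
Proof.
case: c => [[[]|[i|i]]|[]] /=.
- by rewrite dPP_tens /xg dP_basis /dbase /= tens0l tens0r addr0 (morph0 Dm_add).
- rewrite dPP_add !dPP_tens dP_act /xg /yg !dP_basis /dbase /= act0 tens0l tens0r !tw_basis /=.
  rewrite ?expr1 ?expr0 ?scale1r ?scaleN1r (morphB Dm_add) !Dm_basis /= !actPP_tens !act_basis.
  expand; rewrite ?(mulg1' _ GG) ?gmul1 ?tens_basis; zsolve.
- rewrite dPP_add !dPP_tens dP_act /xg /zg !dP_basis /dbase /= act0 tens0l tens0r !tw_basis /=.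
  rewrite ?expr1 ?expr0 ?scale1r ?scaleN1r (morphB Dm_add) !Dm_basis /= !actPP_tens !act_basis.
  expand; rewrite ?(mulg1' _ GG) ?gmul1 ?tens_basis; zsolve.
- rewrite -/(wg n GG) dP_wg formula_eq // Sn_rel !dPP_add !dPP_tens dP_wg Qw_chain hrel tw_C.
  rewrite /xg !dP_basis /dbase /= tw_basis /= ?expr0 ?scale1r tens0r tens0l dP_C hrel subrr tens0l.
  rewrite dP_add dP_act /yg /zg !dP_basis /dbase /=.
  rewrite ?tw_basis /= ?expr0 ?scale1r.
  expand; rewrite ?(mulg1' _ GG) ?gmul1 ?tens_basis; zsolve.
Qed.


Lemma chain_all (hrel : ev (relator n) = g1) u : dPP GG t (Dm u) = Dm (dP GG t u).
Proof.
apply: (@fg_ext _ _ (fun u => dPP GG t (Dm u)) (fun u => Dm (dP GG t u))).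
- by move=> x y; rewrite Dm_add dPP_add.
- by move=> x y; rewrite dP_add Dm_add.
move=> [g c]; rewrite Dm_basis dPP_actPP chain_basis //.
have -> : << (g, c) >> = act GG (gr g) << (g1, c) >> :> P by rewrite act_basis mulg1'.
by rewrite dP_act Dm_act.
Qed.

Definition allp (K : choiceType) (Pr : pred K) (D : {freeg K / int}) := all Pr (dom D).
Arguments allp {K} Pr D.

Lemma allp0 (K : choiceType) (Pr : pred K) : allp Pr 0.
Proof. by rewrite /allp dom0. Qed.
Lemma allpD (K : choiceType) (Pr : pred K) x y : allp Pr x -> allp Pr y -> allp Pr (x + y).
Proof.
move=> /allP hx /allP hy; apply/allP => k /domD_subset.
by rewrite mem_cat => /orP[] h; [exact: hx | exact: hy].
Qed.
Lemma allpN (K : choiceType) (Pr : pred K) x : allp Pr x -> allp Pr (- x).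
Proof. by move=> /allP hx; apply/allP => k; rewrite domN; apply: hx. Qed.
Lemma allpB (K : choiceType) (Pr : pred K) x y : allp Pr x -> allp Pr y -> allp Pr (x - y).
Proof. by move=> hx hy; apply: allpD => //; apply: allpN. Qed.
Lemma allpZ (K : choiceType) (Pr : pred K) (c : int) x : allp Pr x -> allp Pr (c *: x).
Proof. by move=> /allP hx; apply/allP => k /domZ_subset; apply: hx. Qed.
Lemma allpU (K : choiceType) (Pr : pred K) k : Pr k -> allp Pr << k >>.
Proof. by move=> h; rewrite /allp domU1 /= h. Qed.
Lemma allp_sum (K : choiceType) (Pr : pred K) (I : Type) (r : seq I) (Q : pred I) (F : I -> {freeg K / int}) :
  (forall i, Q i -> allp Pr (F i)) -> allp Pr (\sum_(i <- r | Q i) F i).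
Proof.
move=> h; apply: (big_ind (allp Pr)) => //; [exact: allp0 | exact: allpD].
Qed.
Lemma allp_sub (K : choiceType) (P1 P2 : pred K) x : (forall k, P1 k -> P2 k) -> allp P1 x -> allp P2 x.
Proof. by move=> h /allP hx; apply/allP => k /hx /h. Qed.
Lemma allp_lift (K K' : choiceType) (Pr : pred K') (f : K -> {freeg K' / int}) u :
  (forall k, k \in dom u -> allp Pr (f k)) -> allp Pr (fglift f u).
Proof.
move=> h; rewrite -(freeg_sumE u) raddf_sum big_seq; apply: allp_sum => z hz.
change (allp Pr (fglift f << coeff z u *g z >>)).
by rewrite liftU; apply: allpZ; apply: h.
Qed.

Lemma allp_tens r s (u v : P) :
  allp (fun k => cdeg k.2 == r) u -> allp (fun k => cdeg k.2 == s) v ->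
  allp (fun k : (G * cell n) * (G * cell n) => (cdeg k.1.2 == r) && (cdeg k.2.2 == s)) (tens u v).
Proof.
move=> /allP hu /allP hv; apply: allp_lift => k1 /hu h1; apply: allp_lift => k2 /hv h2.
by apply: allpU; rewrite /= h1 h2.
Qed.

Lemma allp_act (Q : pred (cell n)) (r : ZG G) (u : P) :
  allp (fun k => Q k.2) u -> allp (fun k => Q k.2) (act GG r u).
Proof.
move=> /allP hu; apply: allp_lift => g _; apply: allp_lift => k /hu hk.
exact: allpU.
Qed.

Lemma allp_actPP (Q : pred (cell n * cell n)) g (v : PP) :
  allp (fun k => Q (k.1.2, k.2.2)) v -> allp (fun k => Q (k.1.2, k.2.2)) (actPP GG (gr g) v).
Proof.
move=> /allP hv; rewrite /actPP /gr lift1; apply: allp_lift => k /hv hk.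
exact: allpU.
Qed.

Lemma hom_atom d g c : cdeg c = d -> allp (fun k : G * cell n => cdeg k.2 == d) << (g, c) >>.
Proof. by move=> h; apply: allpU; rewrite /= h. Qed.

Ltac homsolve :=
  repeat first
   [ apply: allpD | apply: allpB | apply: allpN
   | apply: allp_sum => ? _
   | apply: allp_tens
   | apply: (allp_act (fun c => cdeg c == _))
   | apply: hom_atom; reflexivity
   | rewrite /Tj | rewrite /Aj | rewrite /Bj ].

Lemma hom11 : allp (fun k : (G * cell n) * (G * cell n) => (cdeg k.1.2 == 1%N) && (cdeg k.2.2 == 1%N))
  (Delta11_formula GG t).
Proof. rewrite /Delta11_formula /yg /zg; homsolve. Qed.



Lemma projPP_add r s : {morph (projPP (n:=n) (G:=G) r s) : x y / x + y}.
Proof.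
move=> x y; apply/eqP/freeg_eqP => z.
by rewrite coeffD /projPP !fgmap_f0_coeffE // coeffD mulrnDl.
Qed.

Lemma projPP_all r s (v : PP) :
  allp (fun k : (G * cell n) * (G * cell n) => (cdeg k.1.2 == r) && (cdeg k.2.2 == s)) v ->
  projPP r s v = v.
Proof.
move=> /allP h; apply/eqP/freeg_eqP => z; rewrite /projPP fgmap_f0_coeffE //.
case: (boolP (z \in dom v)) => hz; first by have /= -> := h z hz; rewrite mulr1n.
by rewrite coeff_outdom // mul0rn.
Qed.

Lemma projPP_none r s (Q : pred ((G * cell n) * (G * cell n))) (v : PP) :
  allp Q v -> (forall k, Q k -> ~~ ((cdeg k.1.2 == r) && (cdeg k.2.2 == s))) ->
  projPP r s v = 0.
Proof.
move=> /allP h hQ; apply/eqP/freeg_eqP => z; rewrite /projPP fgmap_f0_coeffE // coeff0.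
case: (boolP (z \in dom v)) => hz; last by rewrite coeff_outdom // mul0rn.
by have /= /negbTE -> := hQ z (h z hz); rewrite mulr0n.
Qed.

Arguments projPP_all {r s v}.
Arguments projPP_none {r s Q v}.
Arguments allp_sub {K P1 P2 x}.
Arguments allp_tens {r s u v}.

Lemma allp_tens_sum r s (u v : P) :
  allp (fun k => cdeg k.2 == r) u -> allp (fun k => cdeg k.2 == s) v ->
  allp (fun k : (G * cell n) * (G * cell n) => (cdeg k.1.2 + cdeg k.2.2)%N == (r + s)%N) (tens u v).
Proof.
move=> hu hv; apply: allp_sub (allp_tens hu hv) => k /andP [/eqP -> /eqP ->] //.
Qed.

Arguments allp_tens_sum {r s u v}.

Lemma D0_hom c : allp (fun k : (G * cell n) * (G * cell n) => (cdeg k.1.2 + cdeg k.2.2)%N == cdeg c) (D0 c).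
Proof.
case: c => [[[]|[i|i]]|[]] /=.
- by apply: (allp_tens_sum (r := 0%N) (s := 0%N)); rewrite /xg; apply: hom_atom.
- rewrite /xg /yg; apply: allpD.
    apply: (allp_tens_sum (r := 1%N) (s := 0%N)); first exact: hom_atom.
    by apply: (allp_act (fun c => cdeg c == 0%N)); apply: hom_atom.
  by apply: (allp_tens_sum (r := 0%N) (s := 1%N)); apply: hom_atom.
- rewrite /xg /zg; apply: allpD.
    apply: (allp_tens_sum (r := 1%N) (s := 0%N)); first exact: hom_atom.
    by apply: (allp_act (fun c => cdeg c == 0%N)); apply: hom_atom.
  by apply: (allp_tens_sum (r := 0%N) (s := 1%N)); apply: hom_atom.
- rewrite /xg /wg; apply: allpD; first apply: allpD.
  + by apply: (allp_tens_sum (r := 2%N) (s := 0%N)); apply: hom_atom.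
  + by apply: allp_sub hom11 => k /andP [/eqP -> /eqP ->].
  + by apply: (allp_tens_sum (r := 0%N) (s := 2%N)); apply: hom_atom.
Qed.

Lemma main_m (hrel : ev (relator n) = g1) :
    is_diag_approx GG t Dm /\
    [/\         Dm (xg n GG) = tens (xg n GG) (xg n GG),
        forall i : 'I_n, Dm (yg GG i) =
          tens (yg GG i) (act GG (gr (t (inl i))) (xg n GG)) + tens (xg n GG) (yg GG i),
        forall i : 'I_n, Dm (zg GG i) =
          tens (zg GG i) (act GG (gr (t (inr i))) (xg n GG)) + tens (xg n GG) (zg GG i),
        projPP 0 2 (Dm (wg n GG)) = tens (xg n GG) (wg n GG)
      & projPP 1 1 (Dm (wg n GG)) = Delta11_formula GG t].
Proof.
have hT1 : allp (fun k : (G * cell n) * (G * cell n) => (cdeg k.1.2 == 2%N) && (cdeg k.2.2 == 0%N))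
    (tens (wg n GG) << (gm (b ord_max) (a ord_max), cX n) >>).
  by apply: allp_tens; apply: hom_atom.
have hT3 : allp (fun k : (G * cell n) * (G * cell n) => (cdeg k.1.2 == 0%N) && (cdeg k.2.2 == 2%N))
    (tens (xg n GG) (wg n GG)).
  by apply: allp_tens; apply: hom_atom.
split; last split.
- split.
  + exact: Dm_add.
  + exact: Dm_act.
  + move=> d u hu; apply: allp_lift => -[g c] hk.
    have /eqP hd : cdeg c == d := allP hu _ hk.
    apply: (allp_actPP (fun p => (cdeg p.1 + cdeg p.2)%N == d)).
    by rewrite -hd; apply: D0_hom.
  + exact: chain_all.
  + move=> u hu; rewrite -[u]freeg_sumE /Dm /epsPP /epsP !raddf_sum /=.
    apply: eq_big_seq => -[g c] hk.
    have hc : cdeg c == 0%N := allP hu _ hk.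
    move: hc; case: c hk => [[[]|[i|i]]|[]] //= hk _.
    change (fglift (fun k => ((k.1.2 == cX n) && (k.2.2 == cX n))%:R : int^o)
             (fglift (fun k => actPP GG (gr k.1) (D0 k.2)) << coeff (g, cX n) u *g (g, cX n) >>)
          = fglift (fun k => (k.2 == cX n)%:R : int^o) << coeff (g, cX n) u *g (g, cX n) >>).
    rewrite !liftU /= /xg tens_basis actPP_basis.
    rewrite !scale_int_mulz raddfMz; congr (_ *~ _).
    change (fglift (fun k : (G * cell n) * (G * cell n) => ((k.1.2 == cX n) && (k.2.2 == cX n))%:R : int^o)
       << ((gm g g1, cX n), (gm g g1, cX n)) >> = 1).
    by rewrite lift1 /=.
- by rewrite /xg Dm_g1.
- by move=> i; rewrite /yg Dm_g1.
- by move=> i; rewrite /zg Dm_g1.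
- have -> : Dm (wg n GG) = tens (wg n GG) << (gm (b ord_max) (a ord_max), cX n) >>
      + Delta11_formula GG t + tens (xg n GG) (wg n GG) := Dm_g1 _.
  rewrite projPP_add projPP_add (projPP_all hT3).
  rewrite (projPP_none hT1) ?(projPP_none hom11) ?add0r // => k /andP [/eqP -> /eqP ->] //.
- have -> : Dm (wg n GG) = tens (wg n GG) << (gm (b ord_max) (a ord_max), cX n) >>
      + Delta11_formula GG t + tens (xg n GG) (wg n GG) := Dm_g1 _.
  rewrite projPP_add projPP_add (projPP_all hom11).
  rewrite (projPP_none hT1) ?(projPP_none hT3) ?add0r ?addr0 // => k /andP [/eqP -> /eqP ->] //.
Qed.

End Main.

Theorem mainTheorem2 (n : nat) (hn : (0 < n)%N) (G : choiceType)
  (GG : group_on G) (t : gen n -> G) (HG : is_presentation GG t) :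
  exists D : Pmod G n -> PPmod G n,
    is_diag_approx GG t D /\
    [/\         D (xg n GG) = tens (xg n GG) (xg n GG),
        forall i : 'I_n, D (yg GG i) =
          tens (yg GG i) (act GG (gr (t (inl i))) (xg n GG)) + tens (xg n GG) (yg GG i),
        forall i : 'I_n, D (zg GG i) =
          tens (zg GG i) (act GG (gr (t (inr i))) (xg n GG)) + tens (xg n GG) (zg GG i),
        projPP 0 2 (D (wg n GG)) = tens (xg n GG) (wg n GG)
      & projPP 1 1 (D (wg n GG)) = Delta11_formula GG t].
Proof.
case: n hn t HG => [//|m] _ t HG.
exists (@Dm m G GG t).
exact: (@main_m m G GG t HG.1).
Qed.
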